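(* Let $G=(V,E)$ be a finite, simple, connected graph with $|V|\geq 3$, and let $d\in \mathrm{Der}(\mathcal{A}(G))$. If $\Gamma_3(G)=\emptyset$, i.e. $G$ has no twin class with at least three vertices, then $d=0$.
   Context: Throughout, $\mathbb{K}$ is a field of characteristic $0$. A graph $G=(V,E)$ has vertex set $V=\{1,\dots,n\}$ and is assumed finite, simple (no loops, no multiple edges) and connected. $\mathcal{N}(i)$ denotes the set of neighbors of vertex $i$, $\deg(i)=|\mathcal{N}(i)|$, and $(a_{ij})$ is the adjacency matrix ($a_{ij}=1$ if $i,j$ are adjacent, $0$ otherwise). The evolution algebra $\mathcal{A}(G)$ is the $\mathbb{K}$-algebra with basis $\{e_i: i\in V\}$ and product $e_i\cdot e_i=\sum_{k\in V}a_{ik}e_k=\sum_{k\in\mathcal{N}(i)}e_k$ and $e_i\cdot e_j=0$ for $i\neq j$. A derivation of $\mathcal{A}(G)$ is a linear map $d:\mathcal{A}(G)\to\mathcal{A}(G)$ with $d(u\cdot v)=d(u)\cdot v+u\cdot d(v)$ for all $u,v$; $\mathrm{Der}(\mathcal{A}(G))$ is the space of derivations. Two vertices $i,j$ are twins, written $i\sim_t j$, if $\mathcal{N}(i)=\mathcal{N}(j)$; this is an equivalence relation whose classes are called twin classes. $\Gamma_3(G)$ denotes the set of twin classes of $G$ having at least three vertices. *)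

(* Defs.v *)
From HB Require Import structures.
From mathcomp Require Import all_boot all_order all_algebra.
Set Implicit Arguments. Unset Strict Implicit. Unset Printing Implicit Defensive.
Import GRing.Theory.
Local Open Scope ring_scope.

Definition simple_graph n (e : rel 'I_n) : Prop :=
  symmetric e /\ irreflexive e.

Definition connected_graph n (e : rel 'I_n) : Prop :=
  forall i j : 'I_n, connect e i j.

(* The evolution algebra A(G): underlying space 'rV[K]_n, basis e_i = delta_i.
   Product: e_i . e_i = sum_{k} a_ik e_k, e_i . e_j = 0 (i <> j), extended
   bilinearly: (u . v)_k = sum_i u_i v_i a_ik. *)
Definition evo_mul (K : fieldType) n (e : rel 'I_n) (u v : 'rV[K]_n) : 'rV[K]_n :=
  \row_(k < n) \sum_(i < n) u 0 i * v 0 i * (e i k)%:R.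

Definition is_derivation (K : fieldType) n (e : rel 'I_n)
  (d : {linear 'rV[K]_n -> 'rV[K]_n}) : Prop :=
  forall u v, d (evo_mul e u v) = evo_mul e (d u) v + evo_mul e u (d v).

Definition twin n (e : rel 'I_n) (i j : 'I_n) : bool := [forall k, e i k == e j k].

Definition twin_class n (e : rel 'I_n) (i : 'I_n) : {set 'I_n} :=
  [set j | twin e i j].

Definition Gamma3 n (e : rel 'I_n) : {set {set 'I_n}} :=
  [set twin_class e i | i in [pred i | 3 <= #|twin_class e i|]%N].

(* Main.v *)
Require Import Defs.
From HB Require Import structures.
From mathcomp Require Import all_boot all_order all_algebra.
From mathcomp Require Import zify ring.
Import GRing.Theory.
Local Open Scope ring_scope.

Lemma natK_neq0 (K : fieldType) (hK : [pchar K] =i pred0) (p : nat) :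
  prime p -> (p%:R : K) != 0.
Proof.
move=> hp; apply/negP => /eqP h.
have := hK p; rewrite !inE hp h eqxx //.
Qed.

Lemma evo_dl (K : fieldType) n (e : rel 'I_n) (u : 'rV[K]_n) i k :
  (evo_mul e (delta_mx 0 i) u) 0 k = u 0 i * (e i k)%:R.
Proof.
rewrite mxE (bigD1 i) //= big1 ?addr0; first by rewrite mxE !eqxx mul1r.
by move=> l /negbTE hl; rewrite mxE hl mul0r !mul0r.
Qed.

Lemma evo_dr (K : fieldType) n (e : rel 'I_n) (u : 'rV[K]_n) i k :
  (evo_mul e u (delta_mx 0 i)) 0 k = u 0 i * (e i k)%:R.
Proof.
rewrite mxE (bigD1 i) //= big1 ?addr0; first by rewrite mxE !eqxx mulr1.
by move=> l /negbTE hl; rewrite mxE hl mulr0 !mul0r.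
Qed.

Lemma evo_dd (K : fieldType) n (e : rel 'I_n) i :
  evo_mul e (delta_mx 0 i) (delta_mx 0 i) = \sum_k (e i k)%:R *: (delta_mx 0 k : 'rV[K]_n).
Proof.
apply/rowP=> x; rewrite evo_dl summxE mxE !eqxx mul1r (bigD1 x) //= big1 ?addr0.
  by rewrite !mxE !eqxx mulr1.
by move=> k hk; rewrite !mxE eqxx eq_sym (negbTE hk) mulr0.
Qed.

Theorem theorem2p1 (K : fieldType) (hK : [pchar K] =i pred0)
  (n : nat) (e : rel 'I_n)
  (hsimple : simple_graph e) (hconn : connected_graph e) (hn : (3 <= n)%N)
  (d : {linear 'rV[K]_n -> 'rV[K]_n}) (hd : is_derivation e d)
  (hG : Gamma3 e = set0) :
  forall u : 'rV[K]_n, d u = 0.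
Proof.
have [hsym hirr] := hsimple.
have h2 : (2%:R : K) != 0 by apply: natK_neq0.
have h3 : (3%:R : K) != 0 by apply: natK_neq0.
pose D := fun a b : 'I_n => (d (delta_mx 0 b)) 0 a.
have hA : forall a b x, a != b -> D b a * (e b x)%:R + D a b * (e a x)%:R = 0.
  move=> a b x hab.
  have := congr1 (fun M : 'rV[K]_n => M 0 x) (hd (delta_mx 0 a) (delta_mx 0 b)).
  have -> : evo_mul e (delta_mx 0 a) (delta_mx 0 b) = 0 :> 'rV[K]_n.
    by apply/rowP=> k; rewrite evo_dl !mxE eqxx (negbTE hab) mul0r.
  by rewrite linear0 /= [in RHS]mxE evo_dr evo_dl mxE => /esym.
have hB : forall i m, \sum_k (e i k)%:R * D m k = D i i * (e i m)%:R + D i i * (e i m)%:R.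
  move=> i m.
  have := congr1 (fun M : 'rV[K]_n => M 0 m) (hd (delta_mx 0 i) (delta_mx 0 i)).
  rewrite evo_dd linear_sum summxE /= [in RHS]mxE evo_dr evo_dl => <-.
  by apply: eq_bigr => k _; rewrite linearZ mxE.
have hnb : forall i : 'I_n, exists x, e i x.
  move=> i.
  have h0 : (0 < n)%N by lia.
  have h1 : (1 < n)%N by lia.
  have [j hij] : exists j : 'I_n, i != j.
    case: (eqVneq (i : nat) 0%N) => hi; [exists (Ordinal h1) | exists (Ordinal h0)];
    apply/negP => /eqP h; have := f_equal (@nat_of_ord n) h; simpl; lia.
  have /connectP [p hp hl] := hconn i j.
  case: p hp hl => [|x p] /=; first by move=> _ hl; move: hij; rewrite hl eqxx.
  by move=> /andP[hx _] _; exists x.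
have htw : forall a b, twin e a b -> forall k, e a k = e b k.
  by move=> a b /forallP h k; apply/eqP.
have hwt : forall a b, (forall k, e a k = e b k) -> twin e a b.
  by move=> a b h; apply/forallP => k; apply/eqP.
have hno3 : forall a b c, twin e a b -> twin e a c -> a != b -> a != c -> b != c -> False.
  move=> a b c hab hac nab nac nbc.
  have hin : twin_class e a \in Gamma3 e.
    apply/imsetP; exists a => //; rewrite inE.
    have hs : a |: (b |: [set c]) \subset twin_class e a.
      apply/subsetP => x; by rewrite !inE => /or3P [] /eqP -> //; apply: hwt.
    apply: leq_trans (subset_leq_card hs).
    by rewrite cardsU1 cardsU1 cards1 !inE negb_or nab nac nbc.
  by rewrite hG inE in hin.
have hnt : forall a b, a != b -> ~~ twin e a b -> D a b = 0.
  move=> a b nab /forallPn [x hx].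
  have hba : b != a by rewrite eq_sym.
  have := hA b a x hba.
  move: hx; case hax: (e a x); case hbx: (e b x) => //= _;
    rewrite ?mulr1n ?mulr0n ?mulr1 ?mulr0 ?addr0 ?add0r //.
  move=> hDba; have [y hy] := hnb a.
  by have := hA b a y hba; rewrite hDba mul0r addr0 hy mulr1n mulr1.
have hsum2 : forall i j m y, i != j -> e y i -> e y j ->
    (forall k, k != i -> k != j -> D m k = 0) ->
    \sum_k (e y k)%:R * D m k = D m i + D m j.
  move=> i j m y nij hyi hyj hz.
  rewrite (bigD1 i) //= (bigD1 j) /=; last by rewrite eq_sym.
  rewrite big1 ?addr0; first by rewrite hyi hyj !mulr1n !mul1r.
  by move=> k /andP [ki kj]; rewrite hz // mulr0.
have htwz : forall i j, i != j -> twin e i j -> D i j = 0.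
  move=> i j nij htij.
  have hij := htw i j htij.
  have hz : forall m k, (m == i) || (m == j) -> k != i -> k != j -> D m k = 0.
    move=> m k /orP [] /eqP -> nki nkj; apply: hnt.
    - by rewrite eq_sym.
    - by apply/negP => htk; apply: (hno3 i j k) => //; rewrite eq_sym.
    - by rewrite eq_sym.
    - apply/negP => htk; apply: (hno3 i j k) => //; last by rewrite eq_sym.
      + by apply: hwt => x; rewrite hij (htw _ _ htk).
      + by rewrite eq_sym.
  have [y hy] := hnb i.
  have hyi : e y i by rewrite hsym.
  have hyj : e y j by rewrite hsym -hij.
  have e1 := hB y i; rewrite (hsum2 i j) ?eqxx // in e1; last by move=> k; apply: hz; rewrite eqxx.
  have e2 := hB y j; rewrite (hsum2 i j) ?eqxx ?orbT // in e2; last by move=> k; apply: hz; rewrite eqxx orbT.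
  rewrite hyi mulr1n mulr1 in e1.
  rewrite hyj mulr1n mulr1 in e2.
  have e3 : \sum_k (e i k)%:R * D y k = \sum_k (e j k)%:R * D y k.
    by apply: eq_bigr => k _; rewrite hij.
  rewrite !hB -hij hy mulr1n !mulr1 in e3.
  have e4 := hA i j y nij; rewrite -hij hy mulr1n !mulr1 in e4.
  have hdd : D i i = D j j.
    apply/eqP; rewrite -subr_eq0.
    have : (D i i - D j j) * 2%:R = 0.
      have -> : (D i i - D j j) * 2%:R = (D i i + D i i) - (D j j + D j j) by ring.
      by rewrite e3 subrr.
    by move/eqP; rewrite mulf_eq0 (negbTE h2) orbF.
  have : D i j * 2%:R = 0.
    have -> : D i j * 2%:R = ((D i i + D i j) - (D j i + D j j)) + (D j i + D i j) + (D j j - D i i) by ring.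
    by rewrite e1 e2 e4 hdd !subrr !addr0.
  by move/eqP; rewrite mulf_eq0 (negbTE h2) orbF => /eqP.
have hoff : forall a b, a != b -> D a b = 0.
  move=> a b nab; case: (boolP (twin e a b)) => ht; first exact: htwz.
  exact: hnt.
have hsum1 : forall m y, e y m -> \sum_k (e y k)%:R * D m k = D m m.
  move=> m y hym; rewrite (bigD1 m) //= big1 ?addr0; first by rewrite hym mulr1n mul1r.
  by move=> k km; rewrite hoff ?mulr0 // eq_sym.
have hdiag : forall i, D i i = 0.
  move=> i; have [y hy] := hnb i.
  have hyi : e y i by rewrite hsym.
  have f1 := hB y i; rewrite hsum1 // hyi mulr1n mulr1 in f1.
  have f2 := hB i y; rewrite hsum1 // hy mulr1n mulr1 in f2.
  have : D i i * 3%:R = 0.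
    have -> : D i i * 3%:R = - ((D i i - (D y y + D y y)) + (D y y - (D i i + D i i)) * 2%:R) by ring.
    by rewrite {1}f1 f2 !subrr mul0r addr0 oppr0.
  by move/eqP; rewrite mulf_eq0 (negbTE h3) orbF => /eqP.
have hall : forall j, d (delta_mx 0 j) = 0.
  move=> j; apply/rowP => x; rewrite mxE.
  case: (eqVneq x j) => [->|hxj]; [exact: hdiag | exact: hoff].
move=> u; rewrite (row_sum_delta u) linear_sum big1 // => j _.
by rewrite linearZ hall /= scaler0.
Qed.
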